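(* Let $d\in\mathbb N$ and $\varepsilon\in(0,1)$, let $h=h(d,\varepsilon)$ be the height and $\mathcal P^d_\varepsilon$ the set of leaves of Thiémard's decomposition process (see context), and let $f:[0,1)\to[1,\infty)$ be $$f(x)=1+\sum_{k=1}^\infty\frac{(k-\frac1d)(k-1-\frac1d)\cdots(1-\frac1d)}{(k+1)!}\,x^k .$$ Then $$h\le\left\lceil\frac{d(\varepsilon^{-1}-1)}{f(\varepsilon)}\right\rceil\qquad\text{and in particular}\qquad h\le\left\lceil\frac{d(\varepsilon^{-1}-1)}{1+\frac{d-1}{2d}\varepsilon}\right\rceil .$$ Furthermore, if $d=2$, $$|\mathcal P^2_\varepsilon|\le 2\Big(\frac{\varepsilon^{-1}-1}{f(\varepsilon)}+\frac32\Big)\Big(\frac{\varepsilon^{-1}-1}{f(\varepsilon)}+1\Big),$$ and if $d\ge3$, $$|\mathcal P^d_\varepsilon|\le\frac{d^d}{d!}\Big(\frac{\varepsilon^{-1}-1}{f(\varepsilon)}+\frac12\Big(1+\frac3d\Big)\Big)^d .$$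
   Context: Fix $d\in\mathbb N$ and $\varepsilon\in(0,1]$. For $x,y\in[0,1]^d$ write $[x,y)=\prod_{i=1}^d[x_i,y_i)$ and define the weight $W([x,y))=\prod_{i=1}^d y_i-\prod_{i=1}^d x_i$. Thiémard's decomposition process generates boxes, each with a type in $\{1,\dots,d+1\}$. It starts with $I^d=[0,1)^d=[(0,\dots,0),(1,\dots,1))$, of type $1$. Whenever a generated box $P=[\alpha,\beta)$ has type $j\le d$ and $W(P)>\varepsilon$, it is decomposed (procedure DECOMPOSE$(P,j)$) as follows: put $$\delta^P=\left(\frac{\prod_{i=1}^d\beta_i-\varepsilon}{\prod_{i=1}^{j-1}\alpha_i\prod_{i=j}^d\beta_i}\right)^{1/(d-j+1)},\qquad \gamma^P_i=\alpha_i\ (i<j),\quad \gamma^P_i=\delta^P\beta_i\ (i\ge j).$$ The children of $P$ are the boxes $Q^P_k=[a^{(k)},b^{(k)})$ for $k=j,\dots,d$, where $a^{(k)}_i=\gamma^P_i$ for $i<k$, $a^{(k)}_i=\alpha_i$ for $i\ge k$, $b^{(k)}_k=\gamma^P_k$, $b^{(k)}_i=\beta_i$ for $i\neq k$; the box $Q^P_k$ has type $k$. In addition $P$ has the child $Q^P_{d+1}=[\gamma^P,\beta)$ of type $d+1$. A generated box of type $d+1$ or of weight at most $\varepsilon$ is not decomposed. (Known facts from Thiémard: $\delta^P\in(0,1)$; the process terminates after finitely many steps; $W(Q^P_{d+1})=\varepsilon$ and $W(Q^P_k)=\delta^PW(P)$ for $j\le k\le d$.) $\mathcal P^d_\varepsilon$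 denotes the set of all generated boxes that are not decomposed (the leaves of the process). Indexing: for $r\in\mathbb N$ let $S^r=\{\boldsymbol i\in\mathbb N^r: 1\le i_1\le\dots\le i_r\le d\}$, $S^0=\{0\}$. Put $Q^{(0)}_0=I^d$, $Q^{(1)}_{j_1}=Q^{I^d}_{j_1}$ ($j_1=1,\dots,d$, defined when $W(I^d)>\varepsilon$), and for $\boldsymbol j\in S^r$ with $Q^{(r)}_{\boldsymbol j}$ generated and $W(Q^{(r)}_{\boldsymbol j})>\varepsilon$, $Q^{(r+1)}_{(\boldsymbol j,j_{r+1})}=Q^{Q^{(r)}_{\boldsymbol j}}_{j_{r+1}}$ for $j_{r+1}=j_r,\dots,d$. The height $h=h(d,\varepsilon)$ of the partition is $0$ if $W(I^d)\le\varepsilon$, and otherwise the largest $h\in\mathbb N$ such that there is $\boldsymbol j\in S^{h-1}$ with $Q^{(h-1)}_{\boldsymbol j}$ generated and $W(Q^{(h-1)}_{\boldsymbol j})>\varepsilon$. *)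

(* Defs.v *)
From Stdlib Require Import Reals Lra Lia List ZArith.
From Coquelicot Require Import Coquelicot.
Open Scope R_scope.

(* Points of [0,1]^d are functions nat -> R; only coordinates 1..d matter. *)
Definition box : Type := ((nat -> R) * (nat -> R))%type.

(* prod_range x a b = prod_{i=a}^{b} x i  (empty product = 1 if b < a) *)
Definition prod_range (x : nat -> R) (a b : nat) : R :=
  fold_right Rmult 1 (map x (seq a (S b - a))).

Definition weight (d : nat) (P : box) : R :=
  prod_range (snd P) 1 d - prod_range (fst P) 1 d.

Definition delta (d : nat) (eps : R) (P : box) (j : nat) : R :=
  Rpower ((prod_range (snd P) 1 d - eps) /
          (prod_range (fst P) 1 (j - 1) * prod_range (snd P) j d))
         (/ INR (d - j + 1)).

Definition gamma (d : nat) (eps : R) (P : box) (j : nat) : nat -> R :=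
  fun i => if (i <? j)%nat then fst P i else delta d eps P j * snd P i.

Definition child (d : nat) (eps : R) (P : box) (j k : nat) : box :=
  if (k =? d + 1)%nat then (gamma d eps P j, snd P)
  else ((fun i => if (i <? k)%nat then gamma d eps P j i else fst P i),
        (fun i => if (i =? k)%nat then gamma d eps P j k else snd P i)).

Definition unit_cube : box := (fun _ => 0, fun _ => 1).

(* generated d eps r P j : P is a box generated at depth r of the
   decomposition tree, with type j. *)
Inductive generated (d : nat) (eps : R) : nat -> box -> nat -> Prop :=
| gen_root : generated d eps 0 unit_cube 1
| gen_child : forall r P j k,
    generated d eps r P j -> (j <= d)%nat -> eps < weight d P ->
    (j <= k <= d + 1)%nat ->
    generated d eps (S r) (child d eps P j k) k.

Definition decomposed_at_depth (d : nat) (eps : R) (r : nat) : Prop :=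
  exists P j, generated d eps r P j /\ (j <= d)%nat /\ eps < weight d P.

(* h(d,eps) <= n : h is 0 if no box is decomposed, and otherwise the largest
   h with a decomposed box Q^{(h-1)}_j; so h <= n iff every depth r at which
   some box is decomposed satisfies r+1 <= n. *)
Definition height_le (d : nat) (eps : R) (n : Z) : Prop :=
  forall r, decomposed_at_depth d eps r -> (Z.of_nat (S r) <= n)%Z.

Definition leaf (d : nat) (eps : R) (P : box) : Prop :=
  exists r j, generated d eps r P j /\ (j = (d + 1)%nat \/ weight d P <= eps).

Definition box_eq (d : nat) (P Q : box) : Prop :=
  forall i, (1 <= i <= d)%nat -> fst P i = fst Q i /\ snd P i = snd Q i.

Definition leaves_card_le (d : nat) (eps : R) (c : R) : Prop :=
  forall s : list box,
    ForallOrdPairs (fun P Q => ~ box_eq d P Q) s ->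
    List.Forall (leaf d eps) s ->
    INR (length s) <= c.

Definition fcoef (d : nat) (k : nat) : R :=
  fold_right Rmult 1 (map (fun m => INR m - / INR d) (seq 1 k)) / INR (fact (S k)).

Definition fser (d : nat) (x : R) : R :=
  1 + Series (fun n => fcoef d (S n) * x ^ (S n)).

Definition ceilZ (x : R) : Z := (- Int_part (- x))%Z.

(* Main.v *)
Require Import Defs.
From Stdlib Require Import Reals Lra Lia ZArith List.
From Coquelicot Require Import Coquelicot.
Open Scope R_scope.

Lemma mono0 (f df : R -> R) (x : R) :
  0 <= x ->
  (forall y, 0 <= y <= x -> is_derive f y (df y)) ->
  (forall y, 0 <= y <= x -> 0 <= df y) -> f 0 <= f x.
Proof.
  intros Hx Hd Hs.
  destruct (Req_dec x 0) as [->|Hx0]; [lra|].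
  destruct (MVT_gen f 0 x df) as [c [Hc Heq]].
  - intros y Hy. apply Hd. unfold Rmin, Rmax in Hy.
    destruct (Rle_dec 0 x); lra.
  - intros y Hy. unfold Rmin, Rmax in Hy.
    destruct (Rle_dec 0 x); [|lra].
    apply derivable_continuous_pt. exists (df y).
    apply is_derive_Reals. apply Hd. lra.
  - unfold Rmin, Rmax in Hc. destruct (Rle_dec 0 x); [|lra].
    assert (0 <= df c) by (apply Hs; lra). nra.
Qed.

Fixpoint bc (s : R) (n : nat) : R :=
  match n with O => 1 | S n' => bc s n' * (INR n' - s) / INR (S n') end.

Fixpoint Tp (s : R) (N : nat) (x : R) : R :=
  match N with O => 1 | S N' => Tp s N' x + bc s (S N') * x ^ (S N') end.

Lemma bc_rel s n : bc s (S n) * INR (S n) = - s * bc (s - 1) n.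
Proof.
  revert s; induction n; intros s.
  - simpl. field.
  - change (bc s (S (S n))) with (bc s (S n) * (INR (S n) - s) / INR (S (S n))).
    change (bc (s-1) (S n)) with (bc (s-1) n * (INR n - (s-1)) / INR (S n)).
    assert (INR (S n) <> 0) by (apply not_0_INR; lia).
    assert (INR (S (S n)) <> 0) by (apply not_0_INR; lia).
    assert (E: bc s (S n) = - s * bc (s - 1) n / INR (S n)).
    { rewrite <- IHn. field. auto. }
    rewrite E. rewrite (S_INR (S n)), (S_INR n). rewrite S_INR in *. field.
    pose proof (pos_INR n). repeat split; intro; lra.
Qed.

Lemma isd_plus f g x a b : is_derive f x a -> is_derive g x b ->
  is_derive (fun y => f y + g y) x (a + b).
Proof. intros. apply (is_derive_plus f g x a b); auto. Qed.

Lemma isd_mon c n x : is_derive (fun y => c * y ^ S n) x (c * (INR (S n) * x ^ n)).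
Proof. auto_derive; auto. destruct n; simpl; ring. Qed.

Lemma Tp_derive s N x : is_derive (Tp s (S N)) x (- s * Tp (s - 1) N x).
Proof.
  revert s. induction N; intros s.
  - simpl Tp. apply (is_derive_ext (fun y => 1 + bc s 1 * y)).
    { intros; simpl; ring. }
    auto_derive; auto. simpl. field.
  - change (Tp s (S (S N))) with (fun x => Tp s (S N) x + bc s (S (S N)) * x ^ (S (S N))).
    replace (- s * Tp (s - 1) (S N) x) with
       (- s * Tp (s-1) N x + bc s (S (S N)) * (INR (S (S N)) * x ^ (S N))).
    + apply isd_plus. apply IHN. apply isd_mon.
    + change (Tp (s-1) (S N) x) with (Tp (s-1) N x + bc (s-1) (S N) * x ^ S N).
      replace (bc s (S (S N)) * (INR (S (S N)) * x ^ S N)) with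
        (bc s (S (S N)) * INR (S (S N)) * x ^ S N) by ring.
      rewrite bc_rel. ring.
Qed.

Definition pw (s x : R) := exp (s * ln (1 - x)).

Lemma pw_derive s x : x < 1 -> is_derive (pw s) x (- s * pw (s - 1) x).
Proof.
  intros Hx. unfold pw. auto_derive. lra.
  replace (1 + - x) with (1 - x) by ring.
  replace ((s - 1) * ln (1 - x)) with (s * ln (1 - x) + - ln (1-x)) by ring.
  rewrite exp_plus. rewrite exp_Ropp. rewrite exp_ln by lra. field. lra.
Qed.

Lemma Tp_0 s N : Tp s N 0 = 1.
Proof. induction N; simpl; auto. rewrite IHN. ring. Qed.

Lemma pw_0 s : pw s 0 = 1.
Proof. unfold pw. replace (1-0) with 1 by ring. rewrite ln_1. rewrite Rmult_0_r. apply exp_0. Qed.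

Lemma ln_1x x : 0 <= x < 1 -> ln (1 - x) <= 0.
Proof.
  intros. rewrite <- ln_1. destruct (Req_dec x 0). subst. right. f_equal; ring.
  left. apply ln_increasing; lra.
Qed.

Lemma EgA N : forall s x, s <= 0 -> 0 <= x < 1 -> Tp s N x <= pw s x.
Proof.
  induction N; intros s x Hs Hx.
  - simpl. unfold pw. pose proof (ln_1x x Hx).
    pose proof (exp_ineq1_le (s * ln (1 - x))). nra.
  - assert (H := mono0 (fun y => pw s y - Tp s (S N) y) (fun y => - s * pw (s-1) y - - s * Tp (s - 1) N y) x).
    cbv beta in H. rewrite pw_0, Tp_0 in H.
    enough (1 - 1 <= pw s x - Tp s (S N) x) by lra. apply H. lra.
      - intros y Hy. apply (is_derive_minus (pw s) (Tp s (S N))).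
        apply pw_derive. lra. apply Tp_derive.
      - intros y Hy. assert (Tp (s-1) N y <= pw (s-1) y) by (apply IHN; lra). nra.
Qed.

Lemma EgB N s x : 0 <= s <= 1 -> 0 <= x < 1 -> pw s x <= Tp s N x.
Proof.
  intros Hs Hx. destruct N.
  - simpl. unfold pw. pose proof (ln_1x x Hx).
    assert (exp (s * ln (1-x)) <= exp 0).
    { destruct (Req_dec (s * ln (1-x)) 0) as [->|]; [lra|]. left. apply exp_increasing. nra. }
    rewrite exp_0 in H0. exact H0.
  - assert (H := mono0 (fun y => Tp s (S N) y - pw s y) (fun y => - s * Tp (s - 1) N y - - s * pw (s-1) y) x).
    cbv beta in H. rewrite pw_0, Tp_0 in H.
    enough (1 - 1 <= Tp s (S N) x - pw s x) by lra. apply H. lra.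
      - intros y Hy. apply (is_derive_minus (Tp s (S N)) (pw s)).
        apply Tp_derive. apply pw_derive. lra.
      - intros y Hy. assert (Tp (s-1) N y <= pw (s-1) y) by (apply EgA; lra). nra.
Qed.

Lemma fold_app_R l a : fold_right Rmult 1 (l ++ a :: nil) = fold_right Rmult 1 l * a.
Proof. induction l; simpl. ring. rewrite IHl. ring. Qed.

Lemma fcoef_0 d : fcoef d 0 = 1.
Proof. unfold fcoef. simpl. field. Qed.

Lemma fcoef_S d k : fcoef d (S k) = fcoef d k * (INR (S k) - / INR d) / INR (S (S k)).
Proof.
  unfold fcoef. rewrite seq_S, map_app.
  change (map (fun m => INR m - / INR d) ((1+k)%nat :: nil)) with ((INR (1+k) - /INR d) :: nil).
  rewrite fold_app_R. replace (1 + k)%nat with (S k) by lia.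
  change (fact (S (S k))) with (S (S k) * fact (S k))%nat. rewrite mult_INR.
  assert (INR (fact (S k)) <> 0) by (apply INR_fact_neq_0).
  assert (INR (S (S k)) <> 0) by (apply not_0_INR; lia).
  set (t := / INR d). field. split; auto.
Qed.

Lemma bc_fcoef d k : bc (/ INR d) (S k) = - / INR d * fcoef d k.
Proof.
  induction k as [|k IHk].
  - simpl. rewrite fcoef_0. set (t := / INR d). field.
  - change (bc (/ INR d) (S (S k))) with (bc (/INR d) (S k) * (INR (S k) - / INR d) / INR (S (S k))).
    rewrite IHk, fcoef_S. set (t := / INR d). field. apply not_0_INR; lia.
Qed.

Lemma fcoef_bounds d k : (1 <= d)%nat -> 0 <= fcoef d k <= 1.
Proof.
  intros Hd. assert (0 < / INR d <= 1).
  { assert (1 <= INR d) by (apply (le_INR 1); auto). split. apply Rinv_0_lt_compat; lra.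
    rewrite <- Rinv_1. apply Rinv_le_contravar; lra. }
  induction k. rewrite fcoef_0; lra.
  rewrite fcoef_S. rewrite !S_INR. pose proof (pos_INR k).
  assert (0 <= (INR k + 1 - / INR d) / (INR k + 1 + 1) <= 1).
  { split. apply Rdiv_le_0_compat; lra.
    apply Rmult_le_reg_r with (INR k + 1 + 1). lra.
    unfold Rdiv. rewrite Rmult_assoc, Rinv_l by lra. lra. }
  unfold Rdiv in *. rewrite Rmult_assoc. nra.
Qed.

Definition fa (d : nat) (x : R) (n : nat) := fcoef d (S n) * x ^ (S n).

Lemma Tp_sum d x N : (1 <= d)%nat ->
  1 - Tp (/ INR d) (S (S N)) x = / INR d * x * (1 + sum_n (fa d x) N).
Proof.
  intros Hd. induction N.
  - rewrite sum_O. unfold fa.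
    change (Tp (/INR d) 2 x) with ((1 + bc (/INR d) 1 * x ^ 1) + bc (/INR d) 2 * x^2).
    rewrite !bc_fcoef, fcoef_0. simpl. ring.
  - rewrite sum_Sn. change (plus (sum_n (fa d x) N) (fa d x (S N))) with (sum_n (fa d x) N + fa d x (S N)).
    change (Tp (/INR d) (S (S (S N))) x) with
      (Tp (/INR d) (S (S N)) x + bc (/INR d) (S (S (S N))) * x ^ (S (S (S N)))).
    rewrite bc_fcoef. unfold fa at 2.
    replace (x ^ S (S (S N))) with (x * x ^ S (S N)) by (simpl; ring).
    replace (1 - (Tp (/ INR d) (S (S N)) x + - / INR d * fcoef d (S (S N)) * (x * x ^ S (S N))))
      with ((1 - Tp (/ INR d) (S (S N)) x) + / INR d * fcoef d (S (S N)) * (x * x ^ S (S N))) by ring.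
    rewrite IHN. ring.
Qed.

Lemma fa_ex d x : (1 <= d)%nat -> 0 <= x < 1 -> ex_series (fa d x).
Proof.
  intros Hd Hx. apply (@ex_series_le R_AbsRing R_CompleteNormedModule (fa d x) (fun n => x ^ n)).
  - intros n. unfold fa. change norm with Rabs. simpl.
    pose proof (fcoef_bounds d (S n) Hd). pose proof (pow_le x n (proj1 Hx)).
    assert (x*x^n <= x^n) by nra. assert (0 <= x*x^n) by nra. rewrite Rabs_right. nra. apply Rle_ge. nra.
  - apply ex_series_geom. rewrite Rabs_right; lra.
Qed.

Lemma series_le_const a M : ex_series a -> (forall N, sum_n a N <= M) -> Series a <= M.
Proof.
  intros He HN. pose proof (Series_correct a He) as Hc.
  assert (Rbar_le (Series a) M).
  { apply (is_lim_seq_le (sum_n a) (fun _ => M)). auto. exact Hc. apply is_lim_seq_const. }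
  exact H.
Qed.

Lemma series_ge_const a M : ex_series a -> (forall N, M <= sum_n a N) -> M <= Series a.
Proof.
  intros He HN. pose proof (Series_correct a He) as Hc.
  assert (Rbar_le M (Series a)).
  { apply (is_lim_seq_le (fun _ => M) (sum_n a)). auto. apply is_lim_seq_const. exact Hc. }
  exact H.
Qed.

Lemma fser_upper d eps : (1 <= d)%nat -> 0 < eps < 1 ->
  / INR d * eps * fser d eps <= 1 - Rpower (1 - eps) (/ INR d).
Proof.
  intros Hd He. assert (Hdp : 1 <= INR d) by (apply (le_INR 1); auto).
  assert (Ht : 0 < / INR d <= 1).
  { split. apply Rinv_0_lt_compat; lra.
    rewrite <- Rinv_1. apply Rinv_le_contravar; lra. }
  unfold fser. 
  assert (Series (fa d eps) <= (1 - Rpower (1 - eps) (/ INR d)) / (/ INR d * eps) - 1).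
  { apply series_le_const. apply fa_ex; auto; lra. intros N.
    pose proof (EgB (S (S N)) (/ INR d) eps ltac:(lra) ltac:(lra)).
    pose proof (Tp_sum d eps N Hd). unfold pw in H. unfold Rpower.
    assert (0 < / INR d * eps) by nra.
    set (K := 1 - exp (/ INR d * ln (1 - eps))). set (sN := sum_n (fa d eps) N).
    assert (/ INR d * eps * (1 + sN) <= K) by (unfold K, sN; lra).
    assert (E: K / (/ INR d * eps) - 1 - sN = (K - / INR d * eps * (1 + sN)) / (/ INR d * eps)) by (field; lra).
    assert (0 <= (K - / INR d * eps * (1 + sN)) / (/ INR d * eps)) by (apply Rdiv_le_0_compat; lra).
    assert (HH : (sN:R) <= K / (/ INR d * eps) - 1) by lra. exact HH. }
  unfold fa in H. assert (0 < / INR d * eps) by nra.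
  replace (1 - Rpower (1 - eps) (/ INR d)) with
   (/ INR d * eps * ((1 - Rpower (1 - eps) (/ INR d)) / (/ INR d * eps))) by (field; lra).
  apply Rmult_le_compat_l; lra.
Qed.

Lemma fser_lower d eps : (1 <= d)%nat -> 0 < eps < 1 ->
  1 + (INR d - 1) / (2 * INR d) * eps <= fser d eps.
Proof.
  intros Hd He. assert (Hdp : 1 <= INR d) by (apply (le_INR 1); auto).
  unfold fser. apply Rplus_le_compat_l.
  change (fun n => fcoef d (S n) * eps ^ S n) with (fa d eps).
  replace ((INR d - 1) / (2 * INR d) * eps) with (fa d eps 0).
  2:{ unfold fa. rewrite fcoef_S, fcoef_0. simpl. field. lra. }
  apply series_ge_const. apply fa_ex; auto; lra.
  intros N. induction N. rewrite sum_O. right; reflexivity.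
  rewrite sum_Sn. change (plus (sum_n (fa d eps) N) (fa d eps (S N))) with (sum_n (fa d eps) N + fa d eps (S N)).
  change (fa d eps (S N)) with (fcoef d (S (S N)) * eps ^ S (S N)).
  pose proof (fcoef_bounds d (S (S N)) Hd). pose proof (pow_le eps (S (S N)) ltac:(lra)).
  assert (0 <= fcoef d (S (S N)) * eps ^ S (S N)) by (apply Rmult_le_pos; lra).
  assert (HH : fa d eps 0 <= sum_n (fa d eps) N) by exact IHN. lra.
Qed.


Definition prodl (x : nat -> R) (a n : nat) : R := fold_right Rmult 1 (map x (seq a n)).

Lemma pr_prodl x a b : prod_range x a b = prodl x a (S b - a).
Proof. reflexivity. Qed.

Lemma prodl_S x a n : prodl x a (S n) = x a * prodl x (S a) n.
Proof. reflexivity. Qed.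

Lemma prodl_0 x a : prodl x a 0 = 1.
Proof. reflexivity. Qed.

Lemma prodl_ext x y a n : (forall i, (a <= i < a + n)%nat -> x i = y i) -> prodl x a n = prodl y a n.
Proof.
  revert a. induction n; intros a H. reflexivity.
  rewrite !prodl_S. rewrite (H a) by lia. rewrite (IHn (S a)). reflexivity.
  intros; apply H; lia.
Qed.

Lemma prodl_pos x a n : (forall i, (a <= i < a + n)%nat -> 0 < x i) -> 0 < prodl x a n.
Proof.
  revert a. induction n; intros a H. rewrite prodl_0; lra.
  rewrite prodl_S. apply Rmult_lt_0_compat. apply H; lia. apply IHn. intros; apply H; lia.
Qed.

Lemma prodl_zero x a n i : (a <= i < a + n)%nat -> x i = 0 -> prodl x a n = 0.
Proof.
  revert a. induction n; intros a H Hi. lia.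
  rewrite prodl_S. destruct (Nat.eq_dec i a). subst. rewrite Hi; ring.
  rewrite (IHn (S a)). ring. lia. auto.
Qed.

Lemma prodl_split x a n m : prodl x a (n + m) = prodl x a n * prodl x (a + n) m.
Proof.
  revert a. induction n; intros a. change (0 + m)%nat with m. rewrite prodl_0, Nat.add_0_r. ring.
  simpl (S n + m)%nat. rewrite !prodl_S. rewrite IHn. replace (S a + n)%nat with (a + S n)%nat by lia. ring.
Qed.

Lemma prodl_scale c x a n : prodl (fun i => c * x i) a n = c ^ n * prodl x a n.
Proof.
  revert a. induction n; intros a. simpl. unfold prodl; simpl. ring.
  rewrite !prodl_S. rewrite IHn. simpl. ring.
Qed.

Lemma prodl_one c x a n k : (a <= k < a + n)%nat ->
  prodl (fun i => if (i =? k)%nat then c * x k else x i) a n = c * prodl x a n.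
Proof.
  revert a. induction n; intros a H. lia.
  rewrite !prodl_S. destruct (Nat.eq_dec a k).
  - subst. rewrite Nat.eqb_refl.
    rewrite (prodl_ext _ x). ring. intros i Hi. destruct (Nat.eqb_spec i k). lia. auto.
  - destruct (Nat.eqb_spec a k). lia. rewrite IHn by lia. ring.
Qed.

Lemma Rdiv_le_0_compat a b : 0 <= a -> 0 < b -> 0 <= a / b.
Proof. intros. unfold Rdiv. apply Rmult_le_pos; auto. left; apply Rinv_0_lt_compat; auto. Qed.


Lemma pow_lt_strict a b n : 0 <= a < b -> (1 <= n)%nat -> a ^ n < b ^ n.
Proof.
  intros H Hn. induction n. lia.
  destruct n. simpl. lra.
  simpl in *. assert (a * a ^ n < b * b ^ n) by (apply IHn; lia).
  assert (0 <= a * a ^ n) by (apply Rmult_le_pos; [lra| apply pow_le; lra]).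
  nra.
Qed.

Lemma pow_root a b n : 0 <= a -> 0 <= b -> (1 <= n)%nat -> a ^ n <= b ^ n -> a <= b.
Proof.
  intros Ha Hb Hn H. destruct (Rle_lt_dec a b); auto.
  assert (b ^ n < a ^ n) by (apply pow_lt_strict; auto; lra). lra.
Qed.

Lemma geo_ineq z s n : 0 <= z <= s -> s <= 1 -> (1 - z ^ n) * (1 - s) <= (1 - s ^ n) * (1 - z).
Proof.
  intros Hz Hs. induction n. simpl. lra.
  assert (z ^ n <= s ^ n) by (apply pow_incr; lra).
  assert (0 <= z ^ n) by (apply pow_le; lra).
  simpl.
  replace ((1 - z * z ^ n) * (1 - s)) with ((1 - z ^ n) * (1 - s) + z ^ n * ((1 - z) * (1 - s))) by ring.
  replace ((1 - s * s ^ n) * (1 - z)) with ((1 - s ^ n) * (1 - z) + s ^ n * ((1 - z) * (1 - s))) by ring.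
  assert (0 <= (1 - z) * (1 - s)) by (apply Rmult_le_pos; lra).
  nra.
Qed.

Lemma pow_le_self s n : 0 <= s <= 1 -> (1 <= n)%nat -> s ^ n <= s.
Proof.
  intros Hs Hn. induction n. lia. destruct n. simpl; lra.
  assert (s ^ S n <= s) by (apply IHn; lia). simpl in *.
  assert (0 <= s * s ^ n) by (apply Rmult_le_pos; [lra| apply pow_le; lra]). nra.
Qed.

Lemma key_delta B eps D dl d m j1 :
  0 < eps < B -> 0 < D -> 0 < dl -> (1 <= m)%nat -> d = (m + j1)%nat ->
  dl ^ m * D = B - eps -> B ^ m * (B - eps) ^ j1 <= D ^ d -> dl ^ d * B <= B - eps.
Proof.
  intros He HD Hdl Hm Hd Heq Hinv.
  assert (E1 : (dl ^ d) ^ m * D ^ d = (B - eps) ^ m * (B - eps) ^ j1).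
  { rewrite <- pow_mult, Nat.mul_comm, pow_mult, <- Rpow_mult_distr, Heq, Hd, pow_add. reflexivity. }
  assert (E2 : ((B - eps) / B) ^ m * B ^ m = (B - eps) ^ m).
  { rewrite <- Rpow_mult_distr. f_equal. field. lra. }
  assert (HDd : 0 < D ^ d) by (apply pow_lt; auto).
  assert (Hv : 0 <= ((B - eps) / B) ^ m) by (apply pow_le; apply Rdiv_le_0_compat; lra).
  assert (H1 : (dl ^ d) ^ m <= ((B - eps) / B) ^ m).
  { apply Rmult_le_reg_r with (D ^ d). auto. rewrite E1.
    apply Rle_trans with (((B - eps) / B) ^ m * (B ^ m * (B - eps) ^ j1)).
    - rewrite <- Rmult_assoc, E2. lra.
    - apply Rmult_le_compat_l; auto. }
  apply pow_root in H1; auto.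
  - apply Rmult_le_reg_r with (/ B). apply Rinv_0_lt_compat; lra.
    rewrite Rmult_assoc, Rinv_r by lra. unfold Rdiv in H1. lra.
  - apply pow_le; lra.
  - apply Rdiv_le_0_compat; lra.
Qed.

Lemma key_child B eps D dl d m j1 a p k1 :
  0 < eps < B -> 0 < D -> 0 < dl -> (1 <= p)%nat ->
  m = (a + p)%nat -> k1 = (j1 + a)%nat -> d = (p + k1)%nat ->
  dl ^ m * D = B - eps -> dl ^ d * B <= B - eps -> eps < dl * B ->
  (dl * B) ^ p * (dl * B - eps) ^ k1 <= (dl ^ (a + 1) * D) ^ d.
Proof.
  intros He HD Hdl Hp Hm Hk Hd Heq Hdd Hc.
  destruct p as [|p0]. lia.
  assert (Hdl1 : dl <= 1).
  { destruct (Rle_lt_dec dl 1); auto.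
    assert (1 ^ d < dl ^ d) by (apply pow_lt_strict; lia || lra).
    rewrite pow1 in H. nra. }
  assert (Hpos : 0 < dl ^ (d * p0)) by (apply pow_lt; auto).
  apply Rmult_le_reg_r with (dl ^ (d * p0)). auto.
  assert (EY : (dl ^ (a + 1) * D) ^ d * dl ^ (d * p0) = (B - eps) ^ d).
  { rewrite <- Heq. rewrite !Rpow_mult_distr. rewrite <- !pow_mult.
    replace (m * d)%nat with ((a + 1) * d + d * p0)%nat by (subst; lia).
    rewrite pow_add. ring. }
  rewrite EY.
  assert (H1 : (dl * B - eps) ^ k1 <= (dl * (B - eps)) ^ k1).
  { apply pow_incr. split. lra. nra. }
  assert (EX : (dl * B) ^ S p0 * (dl * (B - eps)) ^ k1 * dl ^ (d * p0) =
               (dl ^ d * B) ^ S p0 * (B - eps) ^ k1).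
  { rewrite !Rpow_mult_distr. rewrite <- pow_mult.
    replace (d * S p0)%nat with (S p0 + k1 + d * p0)%nat by (subst; lia).
    rewrite !pow_add. ring. }
  apply Rle_trans with ((dl * B) ^ S p0 * (dl * (B - eps)) ^ k1 * dl ^ (d * p0)).
  { apply Rmult_le_compat_r. lra. apply Rmult_le_compat_l. apply pow_le; nra. auto. }
  rewrite EX. assert (Ed: (B - eps)^d = (B-eps)^(S p0) * (B-eps)^k1) by (rewrite Hd; apply pow_add). rewrite Ed.
  apply Rmult_le_compat_r. apply pow_le; lra.
  apply pow_incr. split; auto. apply Rmult_le_pos. apply pow_le; lra. lra.
Qed.

Lemma key_decrease B eps dl d s :
  0 < eps < B -> B <= 1 -> 0 < dl -> (1 <= d)%nat -> dl ^ d * B <= B - eps ->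
  0 < s -> s ^ d = 1 - eps -> dl * B <= B - (1 - s).
Proof.
  intros He HB Hdl Hd Hdd Hs Hsd.
  assert (Hs1 : s < 1).
  { destruct (Rlt_le_dec s 1); auto.
    destruct (Req_dec s 1). subst. rewrite pow1 in Hsd. lra.
    assert (1 ^ d < s ^ d) by (apply pow_lt_strict; auto; lra). rewrite pow1 in H0. lra. }
  assert (Hse : 1 - eps <= s) by (rewrite <- Hsd; apply pow_le_self; auto; lra).
  set (z := 1 - (1 - s) / B).
  assert (Hz0 : 0 <= z).
  { unfold z. assert ((1 - s) / B <= 1). { apply Rmult_le_reg_r with B. lra.
      unfold Rdiv. rewrite Rmult_assoc, Rinv_l by lra. lra. } lra. }
  assert (Hzs : z <= s).
  { unfold z. assert (1 - s <= (1 - s) / B). { apply Rmult_le_reg_r with B. lra.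
      unfold Rdiv. rewrite Rmult_assoc, Rinv_l by lra. nra. } lra. }
  pose proof (geo_ineq z s d (conj Hz0 Hzs) (Rlt_le _ _ Hs1)) as G.
  rewrite Hsd in G.
  assert (Ez : 1 - z = (1 - s) / B) by (unfold z; ring).
  rewrite Ez in G.
  assert (G2 : 1 - z ^ d <= eps / B).
  { apply Rmult_le_reg_r with (1 - s). lra.
    replace (eps / B * (1 - s)) with ((1 - (1 - eps)) * ((1 - s) / B)) by (field; lra). auto. }
  assert (G3 : B - eps <= z ^ d * B).
  { apply Rmult_le_compat_r with (r := B) in G2; [|lra].
    replace (eps / B * B) with eps in G2 by (field; lra). lra. }
  assert (dl ^ d <= z ^ d).
  { apply Rmult_le_reg_r with B. lra. lra. }
  apply pow_root in H; auto; try lra.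
  assert (dl * B <= z * B) by (apply Rmult_le_compat_r; lra).
  unfold z in H0. replace ((1 - (1 - s) / B) * B) with (B - (1 - s)) in H0 by (field; lra). lra.
Qed.


Definition Bv d (P : box) := prod_range (snd P) 1 d.
Definition Dv d (P : box) j := prod_range (fst P) 1 (j - 1) * prod_range (snd P) j d.

Lemma child_fst d eps P j k i : (k <= d)%nat ->
  fst (child d eps P j k) i =
  if (i <? k)%nat then (if (i <? j)%nat then fst P i else delta d eps P j * snd P i) else fst P i.
Proof.
  intros Hk. unfold child. destruct (Nat.eqb_spec k (d + 1)). lia. simpl. reflexivity.
Qed.

Lemma child_snd d eps P j k i : (j <= k <= d)%nat ->
  snd (child d eps P j k) i = if (i =? k)%nat then delta d eps P j * snd P k else snd P i.
Proof.
  intros Hk. unfold child. destruct (Nat.eqb_spec k (d + 1)). lia. simpl.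
  unfold gamma. destruct (Nat.ltb_spec k j). lia. reflexivity.
Qed.

Lemma child_B d eps P j k : (1 <= j <= k)%nat -> (k <= d)%nat ->
  Bv d (child d eps P j k) = delta d eps P j * Bv d P.
Proof.
  intros Hj Hk. unfold Bv. rewrite !pr_prodl.
  rewrite (prodl_ext _ (fun i => if (i =? k)%nat then delta d eps P j * snd P k else snd P i)).
  - apply prodl_one. lia.
  - intros i Hi. apply child_snd. lia.
Qed.

Lemma child_D d eps P j k : (1 <= j <= k)%nat -> (k <= d)%nat ->
  Dv d (child d eps P j k) k = delta d eps P j ^ (k - j + 1) * Dv d P j.
Proof.
  intros Hj Hk. unfold Dv. rewrite !pr_prodl.
  set (dl := delta d eps P j).
  replace (S (k - 1) - 1)%nat with ((j - 1) + (k - j))%nat by lia.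
  rewrite prodl_split. replace (1 + (j - 1))%nat with j by lia.
  rewrite (prodl_ext (fst (child d eps P j k)) (fst P) 1 (j - 1)).
  2:{ intros i Hi. rewrite child_fst by lia.
      destruct (Nat.ltb_spec i k); [|lia]. destruct (Nat.ltb_spec i j); [|lia]. auto. }
  rewrite (prodl_ext (fst (child d eps P j k)) (fun i => dl * snd P i) j (k - j)).
  2:{ intros i Hi. rewrite child_fst by lia.
      destruct (Nat.ltb_spec i k); [|lia]. destruct (Nat.ltb_spec i j); [lia|]. auto. }
  rewrite prodl_scale.
  rewrite (prodl_ext (snd (child d eps P j k)) (fun i => if (i =? k)%nat then dl * snd P k else snd P i)).
  2:{ intros i Hi. apply child_snd. lia. }
  rewrite prodl_one by lia.
  replace (S (j - 1) - 1)%nat with (j - 1)%nat by lia.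
  replace (S d - j)%nat with ((k - j) + (S d - k))%nat by lia.
  rewrite (prodl_split (snd P) j). replace (j + (k - j))%nat with k by lia.
  rewrite pow_add. simpl pow. ring.
Qed.

Lemma prodl_const1 a n : prodl (fun _ => 1) a n = 1.
Proof. revert a; induction n; intros a. reflexivity. rewrite prodl_S, IHn. ring. Qed.

Lemma Rpower_pos x y : 0 < Rpower x y.
Proof. unfold Rpower. apply exp_pos. Qed.

Lemma Rpower_root x n : 0 < x -> (1 <= n)%nat -> Rpower x (/ INR n) ^ n = x.
Proof.
  intros Hx Hn. rewrite <- Rpower_pow by apply Rpower_pos.
  rewrite Rpower_mult, Rinv_l. apply Rpower_1; auto. apply not_0_INR; lia.
Qed.

Lemma s_props (d : nat) (eps : R) (Hd : (1 <= d)%nat) (He : 0 < eps < 1) :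
  0 < Rpower (1 - eps) (/ INR d) /\ Rpower (1 - eps) (/ INR d) ^ d = 1 - eps /\ Rpower (1 - eps) (/ INR d) <= 1.
Proof.
  set (s := Rpower (1 - eps) (/ INR d)).
  assert (0 < s) by apply Rpower_pos.
  assert (s ^ d = 1 - eps) by (apply Rpower_root; auto; lra).
  repeat split; auto.
  destruct (Rle_lt_dec s 1); auto.
  assert (1 ^ d < s ^ d) by (apply pow_lt_strict; auto; lra). rewrite pow1 in H1. lra.
Qed.

Lemma inv (d : nat) (eps : R) (Hd : (1 <= d)%nat) (He : 0 < eps < 1) :
  forall r P j, generated d eps r P j ->
  (1 <= j <= d + 1)%nat /\
  ((j <= d)%nat ->
   (forall i, (j <= i)%nat -> fst P i = 0) /\
   (forall i, (1 <= i < j)%nat -> 0 < fst P i) /\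
   (forall i, 0 < snd P i) /\
   Bv d P <= 1 - INR r * (1 - Rpower (1 - eps) (/ INR d)) /\
   (eps < Bv d P -> Bv d P ^ (d - j + 1) * (Bv d P - eps) ^ (j - 1) <= Dv d P j ^ d)).
Proof.
  destruct (s_props d eps Hd He) as [Hs0 [Hsd Hs1]].
  set (s := Rpower (1 - eps) (/ INR d)) in *.
  intros r P j Hg0. induction Hg0 as [|r P j k Hg IH Hjd Hw Hk].
  - split. lia. intros _. unfold unit_cube, Bv, Dv; simpl.
    rewrite !pr_prodl. rewrite !prodl_const1.
    repeat split; intros; try lra; try lia.
    replace (1 - 1)%nat with 0%nat by lia. rewrite prodl_0. rewrite !Rmult_1_r, !pow1. lra.
  - destruct IH as [Hj IH]. destruct (IH Hjd) as [Hf0 [Hfp [Hsp [HB HI]]]].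
    split. lia. intros Hkd.
    assert (HW : weight d P = Bv d P).
    { unfold weight, Bv. rewrite (pr_prodl (fst P)). rewrite (prodl_zero _ 1 _ j). ring. lia. apply Hf0; lia. }
    rewrite HW in Hw.
    assert (HDp : 0 < Dv d P j).
    { unfold Dv. rewrite !pr_prodl. apply Rmult_lt_0_compat; apply prodl_pos; intros i Hi.
      apply Hfp; lia. apply Hsp. }
    set (dl := delta d eps P j).
    assert (Hdl : 0 < dl) by apply Rpower_pos.
    assert (Hdm : dl ^ (d - j + 1) * Dv d P j = Bv d P - eps).
    { unfold dl, delta. fold (Bv d P). fold (Dv d P j). rewrite Rpower_root by (try lia; apply Rdiv_lt_0_compat; lra).
      field. lra. }
    assert (Hdd : dl ^ d * Bv d P <= Bv d P - eps).
    { apply (key_delta _ _ (Dv d P j) _ d (d - j + 1) (j - 1)); auto; try lra; try lia. }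
    assert (HBle : Bv d P <= 1).
    { assert (0 <= INR r * (1 - s)) by (apply Rmult_le_pos; [apply pos_INR|lra]). lra. }
    assert (Hdec : dl * Bv d P <= Bv d P - (1 - s)).
    { apply (key_decrease _ eps _ d s); auto; lra. }
    repeat split.
    + intros i Hi. rewrite child_fst by lia. destruct (Nat.ltb_spec i k). lia. apply Hf0; lia.
    + intros i Hi. rewrite child_fst by lia. destruct (Nat.ltb_spec i k); [|lia].
      destruct (Nat.ltb_spec i j). apply Hfp; lia. apply Rmult_lt_0_compat; auto.
    + intros i. rewrite child_snd by lia. destruct (i =? k)%nat. apply Rmult_lt_0_compat; auto. auto.
    + rewrite child_B by lia. fold dl. rewrite S_INR. lra.
    + intros Hc. rewrite child_B in * by lia. rewrite child_D by lia. fold dl in Hc |- *.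
      apply (key_child _ eps _ _ d (d - j + 1) (j - 1) (k - j) (d - k + 1) (k - 1)); auto; try lra; lia.
Qed.




Lemma pos_neq x : 0 < x -> x <> 0.
Proof. intros; lra. Qed.

Lemma ceil_ge (X : R) (r : nat) : INR r < X -> (Z.of_nat (S r) <= ceilZ X)%Z.
Proof.
  intros H. unfold ceilZ, Int_part. destruct (archimed (- X)) as [H1 H2].
  set (u := up (- X)) in *.
  assert (IZR u < IZR (1 - Z.of_nat r)).
  { rewrite minus_IZR. rewrite <- INR_IZR_INZ. simpl. lra. }
  apply lt_IZR in H0. lia.
Qed.

Lemma ceil_lt (X : R) : IZR (ceilZ X) < X + 1.
Proof.
  unfold ceilZ, Int_part. destruct (archimed (- X)) as [H1 H2].
  rewrite opp_IZR, minus_IZR. simpl. lra.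
Qed.

Lemma ceil_nonneg (X : R) : 0 <= X -> (0 <= ceilZ X)%Z.
Proof.
  intros HX. unfold ceilZ, Int_part. destruct (archimed (- X)) as [H1 H2].
  assert (IZR (up (- X)) < IZR 2) by (simpl; lra). apply lt_IZR in H. lia.
Qed.

Lemma height_from (d : nat) (eps X : R) :
  (forall r, decomposed_at_depth d eps r -> INR r < X) -> height_le d eps (ceilZ X).
Proof. intros H r Hr. apply ceil_ge. auto. Qed.

Definition Xb (d : nat) (eps : R) := INR d * (/ eps - 1) / fser d eps.

Lemma fser_pos (d : nat) (eps : R) (Hd : (1 <= d)%nat) (He : 0 < eps < 1) : 1 <= fser d eps.
Proof.
  pose proof (fser_lower d eps Hd He). assert (1 <= INR d) by (apply (le_INR 1); auto).
  assert (0 <= (INR d - 1) / (2 * INR d) * eps).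
  { apply Rmult_le_pos; [|lra]. apply Rdiv_le_0_compat; lra. }
  lra.
Qed.

Lemma weight_B (d : nat) (eps : R) (Hd : (1 <= d)%nat) (He : 0 < eps < 1) P j r : generated d eps r P j -> (j <= d)%nat -> weight d P = Bv d P.
Proof.
  intros Hg Hj. destruct (inv d eps Hd He r P j Hg) as [Hj1 Hi].
  destruct (Hi Hj) as [Hf0 _].
  unfold weight, Bv. rewrite (pr_prodl (fst P)). rewrite (prodl_zero _ 1 _ j). ring. lia. apply Hf0; lia.
Qed.

Lemma depth_bound (d : nat) (eps : R) (Hd : (1 <= d)%nat) (He : 0 < eps < 1) r : decomposed_at_depth d eps r -> INR r < Xb d eps.
Proof.
  intros [P [j [Hg [Hj Hw]]]].
  destruct (inv d eps Hd He r P j Hg) as [Hj1 Hi].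
  destruct (Hi Hj) as [_ [_ [_ [HB _]]]].
  rewrite (weight_B d eps Hd He P j r Hg Hj) in Hw.
  pose proof (fser_upper d eps Hd He) as Hf. pose proof (fser_pos d eps Hd He) as Hf1.
  assert (1 <= INR d) by (apply (le_INR 1); auto).
  set (k := 1 - Rpower (1 - eps) (/ INR d)) in *.
  set (f := fser d eps) in *.
  assert (Ht : 0 < / INR d) by (apply Rinv_0_lt_compat; lra).
  assert (Hk : 0 < / INR d * eps * f) by (apply Rmult_lt_0_compat; [apply Rmult_lt_0_compat|]; lra).
  assert (INR r * (/ INR d * eps * f) < 1 - eps).
  { pose proof (pos_INR r). assert (INR r * (/ INR d * eps * f) <= INR r * k) by (apply Rmult_le_compat_l; lra). lra. }
  unfold Xb. fold f.
  replace (INR d * (/ eps - 1) / f) with ((1 - eps) / (/ INR d * eps * f)) by (field; repeat split; apply pos_neq; lra).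
  apply Rmult_lt_reg_r with (/ INR d * eps * f). auto.
  replace ((1 - eps) / (/ INR d * eps * f) * (/ INR d * eps * f)) with (1 - eps) by (field; repeat split; apply pos_neq; lra).
  lra.
Qed.

Lemma Xb_pos (d : nat) (eps : R) (Hd : (1 <= d)%nat) (He : 0 < eps < 1) : 0 < Xb d eps.
Proof.
  unfold Xb. pose proof (fser_pos d eps Hd He). assert (1 <= INR d) by (apply (le_INR 1); auto).
  assert (1 < / eps). { rewrite <- Rinv_1. apply Rinv_lt_contravar; lra. }
  apply Rdiv_lt_0_compat; [apply Rmult_lt_0_compat|]; lra.
Qed.

Lemma height1 (d : nat) (eps : R) (Hd : (1 <= d)%nat) (He : 0 < eps < 1) : height_le d eps (ceilZ (Xb d eps)).
Proof. apply height_from. apply (depth_bound d eps Hd He). Qed.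

Lemma height2 (d : nat) (eps : R) (Hd : (1 <= d)%nat) (He : 0 < eps < 1) : height_le d eps
    (ceilZ (INR d * (/ eps - 1) / (1 + (INR d - 1) / (2 * INR d) * eps))).
Proof.
  apply height_from. intros r Hr. apply Rlt_le_trans with (Xb d eps). apply (depth_bound d eps Hd He); auto.
  unfold Xb. pose proof (fser_lower d eps Hd He). assert (1 <= INR d) by (apply (le_INR 1); auto).
  assert (0 <= (INR d - 1) / (2 * INR d) * eps).
  { apply Rmult_le_pos; [|lra]. apply Rdiv_le_0_compat; lra. }
  assert (1 < / eps). { rewrite <- Rinv_1. apply Rinv_lt_contravar; lra. }
  unfold Rdiv. apply Rmult_le_compat_l. apply Rmult_le_pos; lra.
  apply Rinv_le_contravar; lra.
Qed.




Fixpoint nodeF (d : nat) (eps : R) (p : list nat) : box * nat :=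
  match p with
  | nil => (unit_cube, 1%nat)
  | k :: p' => let '(P, j) := nodeF d eps p' in (child d eps P j k, k)
  end.

Fixpoint desc (p : list nat) : Prop :=
  match p with nil => True | a :: t => (forall x, In x t -> (x <= a)%nat) /\ desc t end.

Lemma gen_path d eps r P j : generated d eps r P j ->
  exists p, nodeF d eps p = (P, j) /\ length p = r /\ (1 <= j)%nat /\
            (forall x, In x p -> (1 <= x <= j)%nat) /\ desc p.
Proof.
  induction 1 as [|r P j k Hg IH Hjd Hw Hk].
  - exists nil. split. reflexivity. split. reflexivity. split. lia. split. intros x0 []. exact I.
  - destruct IH as [p [Hn [Hl [Hj1 [Hin Hds]]]]].
    exists (k :: p). simpl. rewrite Hn. split. reflexivity. split. auto. split. lia. split.
    + intros x0 [Hx|Hx]. lia. specialize (Hin x0 Hx). lia.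
    + split; auto. intros x0 Hx. specialize (Hin x0 Hx). lia.
Qed.

Lemma gen_pred d eps r P j : generated d eps (S r) P j -> decomposed_at_depth d eps r.
Proof. intros H. inversion H; subst. exists P0, j0. auto. Qed.

Lemma gen_dplus1 d eps r P : (1 <= d)%nat -> generated d eps r P (d + 1) ->
  exists r' P0 j0, r = S r' /\ P = child d eps P0 j0 (d + 1) /\ generated d eps r' P0 j0 /\
                   (j0 <= d)%nat /\ eps < weight d P0.
Proof.
  intros Hd H. inversion H; subst. lia. exists r0, P0, j. repeat split; auto.
Qed.

Definition LC d eps (Q : box) (p : list nat) : Prop :=
  (exists j, nodeF d eps p = (Q, j) /\ (j <= d)%nat /\ weight d Q <= eps) \/
  (exists P j, nodeF d eps p = (P, j) /\ (j <= d)%nat /\ eps < weight d P /\ Q = child d eps P j (d + 1)).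

Lemma LC_unique d eps Q1 Q2 p : LC d eps Q1 p -> LC d eps Q2 p -> Q1 = Q2.
Proof.
  intros [[j1 [H1 [_ W1]]]|[P1 [j1 [H1 [_ [W1 E1]]]]]] [[j2 [H2 [_ W2]]]|[P2 [j2 [H2 [_ [W2 E2]]]]]];
    rewrite H1 in H2; injection H2; intros; subst; auto; lra.
Qed.

Definition VC d H (p : list nat) : Prop :=
  desc p /\ (forall x, In x p -> (1 <= x <= d)%nat) /\ (length p <= H)%nat.

Lemma leaf_code d eps H : (1 <= d)%nat -> 0 < eps < 1 ->
  (forall r, decomposed_at_depth d eps r -> (S r <= H)%nat) ->
  forall Q, leaf d eps Q -> exists p, LC d eps Q p /\ VC d H p.
Proof.
  intros Hd He HH Q [r [j [Hg Hj]]].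
  destruct (inv d eps Hd He r Q j Hg) as [Hj1 _].
  destruct (Nat.eq_dec j (d + 1)) as [E|E].
  - subst j. destruct (gen_dplus1 d eps r Q Hd Hg) as [r' [P0 [j0 [Hr [HQ [Hg0 [Hj0 Hw0]]]]]]].
    destruct (gen_path d eps r' P0 j0 Hg0) as [p [Hn [Hl [_ [Hin Hds]]]]].
    exists p. split. right. exists P0, j0. auto.
    split; auto. split. intros x Hx. specialize (Hin x Hx). lia.
    assert (S r' <= H)%nat by (apply HH; exists P0, j0; auto). lia.
  - destruct Hj as [Hj|Hj]. contradiction.
    destruct (gen_path d eps r Q j Hg) as [p [Hn [Hl [_ [Hin Hds]]]]].
    exists p. split. left. exists j. repeat split; auto; lia.
    split; auto. split. intros x Hx. specialize (Hin x Hx). lia.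
    destruct r. lia. assert (S r <= H)%nat by (apply HH; eapply gen_pred; eauto). lia.
Qed.

Lemma box_eq_refl d P : box_eq d P P.
Proof. intros i _. auto. Qed.

Lemma codes_exist d eps H : (1 <= d)%nat -> 0 < eps < 1 ->
  (forall r, decomposed_at_depth d eps r -> (S r <= H)%nat) ->
  forall s : list box, ForallOrdPairs (fun P Q => ~ box_eq d P Q) s -> List.Forall (leaf d eps) s ->
  exists cs, length cs = length s /\ NoDup cs /\ (forall c, In c cs -> VC d H c) /\
             (forall c, In c cs -> exists Q, In Q s /\ LC d eps Q c).
Proof.
  intros Hd He HH. induction s as [|a s IH]; intros Hop Hl.
  - exists nil. split. reflexivity. split. constructor. split. intros c0 []. intros c0 [].
  - inversion Hop as [|a' s' Hfa Hop']; subst. inversion Hl as [|a' s' Hla Hls]; subst.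
    destruct (IH Hop' Hls) as [cs [Hlen [Hnd [Hvc Hlc]]]].
    destruct (leaf_code d eps H Hd He HH a Hla) as [c [Hc Hvc0]].
    exists (c :: cs). split. simpl; f_equal; auto. split; [|split].
    + constructor; auto. intros Hin. destruct (Hlc c Hin) as [Q [HQ HLQ]].
      pose proof (LC_unique d eps a Q c Hc HLQ). subst Q.
      rewrite List.Forall_forall in Hfa. apply (Hfa a HQ). apply box_eq_refl.
    + intros c' [<-|Hc']; auto.
    + intros c' [<-|Hc']. exists a; split; auto. left; auto. destruct (Hlc c' Hc') as [Q [HQ HLQ]]. exists Q; split; auto. right; auto.
Qed.

Fixpoint En (H n : nat) : list (list nat) :=
  match H with
  | O => nil :: nil
  | S H' => (fix F (n : nat) : list (list nat) :=
               match n with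
               | O => nil :: nil
               | S n' => F n' ++ map (cons (S n')) (En H' (S n'))
               end) n
  end.

Lemma En_SS H n : En (S H) (S n) = En (S H) n ++ map (cons (S n)) (En H (S n)).
Proof. reflexivity. Qed.

Lemma nil_En H n : In nil (En H n).
Proof.
  destruct H. simpl; auto. induction n. simpl; auto. rewrite En_SS. apply in_or_app. auto.
Qed.

Lemma En_complete : forall H n p, desc p -> (forall x, In x p -> (1 <= x <= n)%nat) ->
  (length p <= H)%nat -> In p (En H n).
Proof.
  induction H as [|H IHH]; intros n p Hds Hin Hl.
  - destruct p; simpl in *. auto. lia.
  - induction n as [|n IHn].
    + destruct p as [|a p]. simpl; auto. specialize (Hin a (or_introl eq_refl)). lia.
    + rewrite En_SS. apply in_or_app. destruct p as [|a p]. left. apply nil_En.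
      destruct Hds as [Hle Hds].
      destruct (Nat.eq_dec a (S n)) as [->|Ha].
      * right. apply in_map. apply IHH; auto.
        intros y Hy. split. apply Hin. right; auto. apply Hle; auto.
        simpl in Hl. lia.
      * left. apply IHn.
        intros y Hy. destruct Hy as [Hy|Hy].
        ++ subst y. specialize (Hin a (or_introl eq_refl)). lia.
        ++ pose proof (Hin a (or_introl eq_refl)). specialize (Hle y Hy).
           specialize (Hin y (or_intror Hy)). lia.
Qed.

Fixpoint prodR (n : nat) (h : R) : R :=
  match n with O => 1 | S n' => prodR n' h * (h + INR (S n')) end.

Lemma prodR_shift n h : prodR (S n) h = (h + 1) * prodR n (h + 1).
Proof.
  induction n. simpl. ring.
  change (prodR (S (S n)) h) with (prodR (S n) h * (h + INR (S (S n)))).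
  rewrite IHn. change (prodR (S n) (h + 1)) with (prodR n (h + 1) * (h + 1 + INR (S n))).
  rewrite (S_INR (S n)). ring.
Qed.

Lemma prodR_0 n : prodR n 0 = INR (fact n).
Proof.
  induction n. reflexivity. change (prodR (S n) 0) with (prodR n 0 * (0 + INR (S n))). rewrite IHn.
  change (fact (S n)) with (S n * fact n)%nat. rewrite mult_INR. ring.
Qed.

Lemma En_length : forall H n, INR (length (En H n)) * INR (fact n) = prodR n (INR H).
Proof.
  induction H as [|H IHH]; intros n.
  - simpl length. simpl INR at 1. rewrite prodR_0. ring.
  - induction n as [|n IHn].
    + simpl. ring.
    + rewrite En_SS, length_app, length_map, plus_INR.
      change (fact (S n)) with (S n * fact n)%nat. rewrite mult_INR.
      change (prodR (S n) (INR (S H))) with (prodR n (INR (S H)) * (INR (S H) + INR (S n))).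
      rewrite <- IHn. rewrite Rmult_plus_distr_r.
      replace (INR (length (En H (S n))) * (INR (S n) * INR (fact n)))
        with (INR (length (En H (S n))) * INR (fact (S n))) by (change (fact (S n)) with (S n * fact n)%nat; rewrite mult_INR; ring).
      rewrite IHH, prodR_shift, <- S_INR, <- IHn. ring.
Qed.

Lemma prodR_nonneg n h : 0 <= h -> 0 <= prodR n h.
Proof.
  intros Hh. induction n. simpl; lra. change (prodR (S n) h) with (prodR n h * (h + INR (S n))). apply Rmult_le_pos; auto.
  pose proof (pos_INR (S n)). lra.
Qed.

Lemma prodR_amgm : forall n h, 0 <= h -> prodR n h <= (h + (INR n + 1) / 2) ^ n.
Proof.
  assert (forall n, (forall h, 0 <= h -> prodR n h <= (h + (INR n + 1) / 2) ^ n) /\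
                    (forall h, 0 <= h -> prodR (S n) h <= (h + (INR (S n) + 1) / 2) ^ (S n))).
  { induction n as [|n [IH1 IH2]].
    - split; intros h Hh. simpl. lra. simpl. lra.
    - split. exact IH2. intros h Hh.
      rewrite prodR_shift.
      change (prodR (S n) (h + 1)) with (prodR n (h + 1) * (h + 1 + INR (S n))).
      assert (A1 : prodR n (h + 1) <= (h + 1 + (INR n + 1) / 2) ^ n) by (apply IH1; lra).
      assert (A0 : 0 <= prodR n (h + 1)) by (apply prodR_nonneg; lra).
      replace (h + (INR (S (S n)) + 1) / 2) with (h + 1 + (INR n + 1) / 2) by (rewrite !S_INR; field).
      set (c := h + 1 + (INR n + 1) / 2) in *.
      assert (A2 : (h + 1) * (h + 1 + INR (S n)) <= c * c).
      { unfold c. rewrite S_INR. assert (Eq: (h + 1 + (INR n + 1) / 2) * (h + 1 + (INR n + 1) / 2) - (h + 1) * (h + 1 + (INR n + 1)) = (INR n + 1) * (INR n + 1) / 4) by field. assert (0 <= (INR n + 1) * (INR n + 1) / 4) by (apply Rdiv_le_0_compat; [apply Rle_0_sqr | lra]). lra. }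
      pose proof (pos_INR n).
      assert (0 <= (h + 1) * (h + 1 + INR (S n))) by (rewrite S_INR; nra).
      assert (0 <= c ^ n) by (apply pow_le; unfold c; lra).
      simpl pow. 
      replace ((h + 1) * (prodR n (h + 1) * (h + 1 + INR (S n)))) with
        (((h + 1) * (h + 1 + INR (S n))) * prodR n (h + 1)) by ring.
      replace (c * (c * c ^ n)) with ((c * c) * c ^ n) by ring.
      apply Rmult_le_compat; auto. }
  intros n. apply H.
Qed.


Lemma leaves_bound d eps : (1 <= d)%nat -> 0 < eps < 1 ->
  forall s : list box, ForallOrdPairs (fun P Q => ~ box_eq d P Q) s -> List.Forall (leaf d eps) s ->
  exists h, 0 <= h /\ h < Xb d eps + 1 /\ INR (length s) * INR (fact d) <= prodR d h.
Proof.
  intros Hd He s Hop Hl.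
  pose proof (Xb_pos d eps Hd He) as HX.
  pose proof (ceil_nonneg (Xb d eps) ltac:(lra)) as Hc0.
  set (H := Z.to_nat (ceilZ (Xb d eps))).
  assert (HH : forall r, decomposed_at_depth d eps r -> (S r <= H)%nat).
  { intros r Hr. pose proof (ceil_ge (Xb d eps) r (depth_bound d eps Hd He r Hr)).
    unfold H. apply Nat2Z.inj_le. rewrite Z2Nat.id; auto. }
  destruct (codes_exist d eps H Hd He HH s Hop Hl) as [cs [Hlen [Hnd [Hvc _]]]].
  assert (Hinc : incl cs (En H d)).
  { intros c Hc. destruct (Hvc c Hc) as [Hds [Hin Hle]]. apply En_complete; auto. }
  pose proof (NoDup_incl_length Hnd Hinc) as Hle.
  exists (INR H). split. apply pos_INR. split.
  - unfold H. rewrite INR_IZR_INZ, Z2Nat.id by auto. apply ceil_lt.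
  - rewrite <- En_length. rewrite <- Hlen. apply Rmult_le_compat_r. apply pos_INR.
    apply le_INR. auto.
Qed.

Theorem mainTheorem4 (d : nat) (eps : R) :
  (1 <= d)%nat -> 0 < eps < 1 ->
  height_le d eps (ceilZ (INR d * (/ eps - 1) / fser d eps)) /\
  height_le d eps
    (ceilZ (INR d * (/ eps - 1) / (1 + (INR d - 1) / (2 * INR d) * eps))) /\
  (d = 2%nat ->
     leaves_card_le d eps
       (2 * ((/ eps - 1) / fser d eps + 3 / 2) * ((/ eps - 1) / fser d eps + 1))) /\
  ((3 <= d)%nat ->
     leaves_card_le d eps
       (INR d ^ d / INR (fact d) *
        ((/ eps - 1) / fser d eps + / 2 * (1 + 3 / INR d)) ^ d)).
Proof.
  intros Hd He.
  split. exact (height1 d eps Hd He).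
  split. exact (height2 d eps Hd He).
  pose proof (fser_pos d eps Hd He) as Hf.
  assert (Hq : 0 <= (/ eps - 1) / fser d eps).
  { apply Rdiv_le_0_compat; [|lra].
    assert (1 < / eps) by (rewrite <- Rinv_1; apply Rinv_lt_contravar; lra). lra. }
  assert (HXq : Xb d eps = INR d * ((/ eps - 1) / fser d eps)) by (unfold Xb, Rdiv; ring).
  set (q := (/ eps - 1) / fser d eps) in *.
  split.
  - intros Hd2 s Hop Hl.
    destruct (leaves_bound d eps Hd He s Hop Hl) as [h [Hh0 [Hh1 Hh2]]].
    subst d. rewrite HXq in Hh1.
    change (prodR 2 h) with (1 * (h + INR 1) * (h + INR 2)) in Hh2.
    change (fact 2) with 2%nat in Hh2.
    replace (INR 2) with 2 in * by (simpl; ring). replace (INR 1) with 1 in * by (simpl; ring).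
    assert ((h + 1) * (h + 2) <= (2 * q + 2) * (2 * q + 3)) by nra.
    nra.
  - intros Hd3 s Hop Hl.
    destruct (leaves_bound d eps Hd He s Hop Hl) as [h [Hh0 [Hh1 Hh2]]].
    rewrite HXq in Hh1.
    pose proof (prodR_amgm d h Hh0) as Ham.
    assert (Hdp : 1 <= INR d) by (apply (le_INR 1); auto).
    assert (Hpw : (h + (INR d + 1) / 2) ^ d <= (INR d * (q + / 2 * (1 + 3 / INR d))) ^ d).
    { apply pow_incr. split. pose proof (pos_INR d). lra.
      replace (INR d * (q + / 2 * (1 + 3 / INR d))) with (INR d * q + 1 + (INR d + 1) / 2) by (field; lra).
      lra. }
    rewrite Rpow_mult_distr in Hpw.
    assert (Hfp : 0 < INR (fact d)) by (apply lt_0_INR; apply lt_O_fact).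
    unfold Rdiv. rewrite Rmult_assoc, (Rmult_comm (/ INR (fact d))), <- Rmult_assoc.
    apply Rmult_le_reg_r with (INR (fact d)). auto.
    rewrite Rmult_assoc, Rinv_l by lra. lra.
Qed.
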